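(* Let $b(z)$ be a holomorphic function and $\bar b(\bar z)=\overline{b(z)}$. On the real four-manifold with complex coordinates $(q,z)$ (and $z+\bar z>0$), consider the metric $$ds^2=(z+\bar z)^{-2}\Bigl\{(z+\bar z)(dq\,d\bar z+d\bar q\,dz)-\bigl[(q+b(z))\,d\bar z+(\bar q+\bar b(\bar z))\,dz\bigr](dz+d\bar z)\Bigr\}.$$ Then this metric is Ricci-flat, and in the coordinates $(q,\bar q,z,\bar z)$ every component of its Riemann tensor vanishes except those obtained from $R_{z\bar z z\bar z}$ by the symmetries of the Riemann tensor, where $$R_{z\bar z z\bar z}=c\,(z+\bar z)^{-3}\Bigl\{2\bigl[b'(z)+\bar b'(\bar z)\bigr]-(z+\bar z)\bigl[b''(z)+\bar b''(\bar z)\bigr]\Bigr\}$$ for a nonzero numerical constant $c$ independent of $b$ (equal to $1/2$ in the paper's conventions).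
   Context: Products of differentials denote symmetrized tensor products, e.g. $dq\,d\bar z=\tfrac12(dq\otimes d\bar z+d\bar z\otimes dq)$; bars denote complex conjugates; primes denote derivatives. This metric is the ultra-hyperbolic hyper-Kähler metric associated with the solution $\psi=[q+b]\ln[q+b]+[\bar q+\bar b]\ln[\bar q+\bar b]-(q+\bar q)[\ln(z+\bar z)+1]+G+2(\alpha-\pi)y+r_0$ (with $G_{z\bar z}=(b+\bar b)/(z+\bar z)^2$) of the Legendre-transformed hyperbolic complex Monge–Ampère equation. *)

(* Defs.v *)
(* the curvature computation is carried out in an abstract
   commutative differential ring. *)
From HB Require Import structures.
From mathcomp Require Import all_boot all_order all_algebra.
Set Implicit Arguments. Unset Strict Implicit. Unset Printing Implicit Defensive.
Import Order.TTheory GRing.Theory Num.Theory.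
Local Open Scope ring_scope.

Definition iq  : 'I_4 := @Ordinal 4 0 isT.
Definition iqb : 'I_4 := @Ordinal 4 1 isT.
Definition iz  : 'I_4 := @Ordinal 4 2 isT.
Definition izb : 'I_4 := @Ordinal 4 3 isT.

(* d i = partial derivative along the i-th coordinate (Wirtinger derivatives
   d/dq, d/dqbar, d/dz, d/dzbar): additive, Leibniz, pairwise commuting. *)
Definition is_deriv4 (R : comUnitRingType) (d : 'I_4 -> R -> R) : Prop :=
  [/\ (forall i x y, d i (x + y) = d i x + d i y),
      (forall i x y, d i (x * y) = d i x * y + x * d i y) &
      (forall i j x, d i (d j x) = d j (d i x))].

Definition is_coords (R : comUnitRingType) (d : 'I_4 -> R -> R) (x : 'I_4 -> R)
  : Prop := forall i j, d i (x j) = (i == j)%:R.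

Section Geometry.
Variable R : comUnitRingType.

(* 1-forms: coefficient vectors w.r.t. (dq, dqbar, dz, dzbar). *)
Definition oneform := 'I_4 -> R.
Definition dx (k : 'I_4) : oneform := fun i => (i == k)%:R.
Definition fadd (w v : oneform) : oneform := fun i => w i + v i.
Definition fscale (a : R) (w : oneform) : oneform := fun i => a * w i.
Definition symp (w v : oneform) : 'M[R]_4 :=
  \matrix_(i, j) (2%:R^-1 * (w i * v j + v i * w j)).

Definition metric (x : 'I_4 -> R) (b bb : R) : 'M[R]_4 :=
  let s := x iz + x izb in
  let A := x iq + b in
  let B := x iqb + bb in
  (s ^- 2) *: (s *: (symp (dx iq) (dx izb) + symp (dx iqb) (dx iz))
               - symp (fadd (fscale A (dx izb)) (fscale B (dx iz)))
                      (fadd (dx iz) (dx izb))).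

Variable d : 'I_4 -> R -> R.
Variable g : 'M[R]_4.

Definition ginv : 'M[R]_4 := invmx g.

Definition chr1 (l i j : 'I_4) : R :=
  2%:R^-1 * (d i (g j l) + d j (g i l) - d l (g i j)).

Definition chr2 (k i j : 'I_4) : R := \sum_(l < 4) ginv k l * chr1 l i j.

Definition riem_up (r s m n : 'I_4) : R :=
  d m (chr2 r n s) - d n (chr2 r m s)
  + \sum_(t < 4) (chr2 r m t * chr2 t n s - chr2 r n t * chr2 t m s).

Definition riem (a s m n : 'I_4) : R := \sum_(r < 4) g a r * riem_up r s m n.

Definition ricci (s n : 'I_4) : R := \sum_(r < 4) riem_up r s r n.

End Geometry.

(* +1 on (z,zbar), -1 on (zbar,z), 0 otherwise: the components R_{ijkl}
   obtained from R_{z zb z zb} by the symmetries of the Riemann tensor are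
   exactly sgn_zzb i j * sgn_zzb k l * R_{z zb z zb}. *)
Definition sgn_zzb (R : comUnitRingType) (i j : 'I_4) : R :=
  if (i == iz) && (j == izb) then 1
  else if (i == izb) && (j == iz) then -1 else 0.

(* Main.v *)
Require Import Defs.
From HB Require Import structures.
From mathcomp Require Import all_boot all_order all_algebra.
From Stdlib Require Import Ring.
Import Order.TTheory GRing.Theory Num.Theory.
Local Open Scope ring_scope.

Lemma ordP4 (P : 'I_4 -> Prop) : P iq -> P iqb -> P iz -> P izb -> forall i, P i.
Proof.
move=> H0 H1 H2 H3 [[|[|[|[|n]]]] Hi].
- by have -> : Ordinal Hi = iq by apply: val_inj.
- by have -> : Ordinal Hi = iqb by apply: val_inj.
- by have -> : Ordinal Hi = iz by apply: val_inj.
- by have -> : Ordinal Hi = izb by apply: val_inj.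
- by [].
Qed.

Lemma sum4 (V : nmodType) (F : 'I_4 -> V) : \sum_(l < 4) F l = F iq + F iqb + F iz + F izb.
Proof.
rewrite !big_ord_recl big_ord0 addr0 !addrA.
have -> : (lift ord0 (lift ord0 (lift ord0 ord0)) : 'I_4) = izb by apply: val_inj.
have -> : (lift ord0 (lift ord0 ord0) : 'I_4) = iz by apply: val_inj.
have -> : (lift ord0 ord0 : 'I_4) = iqb by apply: val_inj.
by have -> : (ord0 : 'I_4) = iq by apply: val_inj.
Qed.

Section Main.
Variable R : comUnitRingType.
Definition T : Type := GRing.ComUnitRing.sort R.
Definition ADD (x y : T) : T := x + y.
Definition MUL (x y : T) : T := x * y.
Definition OPP (x : T) : T := - x.
Definition SUB (x y : T) : T := ADD x (OPP y).
Definition ZERO : T := 0.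
Definition ONE : T := 1.
Lemma RTh : @ring_theory T ZERO ONE ADD MUL SUB OPP eq.
Proof. rewrite /ADD/MUL/OPP/SUB/ZERO/ONE.
split=> //; [exact: add0r|exact: addrC|exact: addrA|exact: mul1r|exact: mulrC|exact: mulrA|exact: mulrDl|exact: subrr]. Qed.
Add Ring RR : RTh.
Lemma addE (x y : R) : x + y = ADD x y. Proof. by []. Qed.
Lemma mulE (x y : R) : x * y = MUL x y. Proof. by []. Qed.
Lemma oppE (x : R) : - x = OPP x. Proof. by []. Qed.
Lemma zeroE : 0 = ZERO :> R. Proof. by []. Qed.
Lemma oneE : 1 = ONE :> R. Proof. by []. Qed.
Lemma toT (x y : T) : x = y -> x = y. Proof. by []. Qed.
Ltac pre := rewrite ?addE ?mulE ?oppE ?zeroE ?oneE; apply: toT.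

Variables (d : 'I_4 -> R -> R) (x : 'I_4 -> R) (b bb : R).
Hypothesis hd : is_deriv4 d.
Hypothesis hx : is_coords d x.
Hypothesis h2u : (2%:R : R) \is a GRing.unit.
Hypothesis hsu : x iz + x izb \is a GRing.unit.
Hypothesis hb : forall i, i != iz -> d i b = 0.
Hypothesis hbb : forall i, i != izb -> d i bb = 0.

Definition s : R := x iz + x izb.
Definition u : R := s^-1.
Definition h : R := 2%:R^-1.
Definition A : R := x iq + b.
Definition B : R := x iqb + bb.
Definition b1 : R := d iz b.
Definition bb1 : R := d izb bb.
Definition b2 : R := d iz b1.
Definition bb2 : R := d izb bb1.

Lemma su : MUL s u = ONE. Proof. exact: mulrV. Qed.
Lemma h2 : MUL (ADD ONE ONE) h = ONE. Proof. exact: mulrV. Qed.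

Lemma dD i y z : d i (y + z) = d i y + d i z. Proof. by case: hd. Qed.
Lemma dM i y z : d i (y * z) = d i y * z + y * d i z. Proof. by case: hd. Qed.
Lemma dC i j y : d i (d j y) = d j (d i y). Proof. by case: hd. Qed.
Lemma d0 i : d i 0 = 0.
Proof. by apply/(addrI (d i 0)); rewrite -dD !addr0. Qed.
Lemma dN i y : d i (- y) = - d i y.
Proof. by apply/(addrI (d i y)); rewrite -dD !subrr d0. Qed.
Lemma d1 i : d i 1 = 0.
Proof.
have H : d i 1 = d i 1 + d i 1 by rewrite -{1}(mulr1 1) dM mulr1 mul1r.
by apply/(addrI (d i 1)); rewrite addr0 -H.
Qed.
Lemma dinv i y : y \is a GRing.unit -> d i (y^-1) = - (y^-1 * y^-1) * d i y.
Proof.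
move=> Hy.
have E : d i y * y^-1 + y * d i (y^-1) = 0 by rewrite -dM mulrV // d1.
have E2 : y * d i (y^-1) = - (d i y * y^-1) by apply/eqP; rewrite -addr_eq0 addrC E.
transitivity (y^-1 * (y * d i (y^-1))); first by rewrite mulrA mulVr // mul1r.
by rewrite E2; pre; ring.
Qed.
Lemma du i : d i u = - (u * u) * ((if i == iz then 1 else 0) + (if i == izb then 1 else 0)).
Proof. by rewrite /u dinv // /s dD !hx; case: (i == iz); case: (i == izb). Qed.
Lemma dh i : d i h = 0.
Proof. rewrite /h dinv // -[2%:R]/(1+1 : R) dD d1 addr0 mulr0 //. Qed.
Lemma dA i : d i A = (if i == iq then 1 else 0) + (if i == iz then b1 else 0).
Proof.
rewrite /A dD hx; case: (i == iq); congr (_ + _);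
by case: eqP => [->|/eqP]; [|apply: hb].
Qed.
Lemma dB i : d i B = (if i == iqb then 1 else 0) + (if i == izb then bb1 else 0).
Proof.
rewrite /B dD hx; case: (i == iqb); congr (_ + _);
by case: eqP => [->|/eqP]; [|apply: hbb].
Qed.
Lemma db1 i : d i b1 = if i == iz then b2 else 0.
Proof. case: eqP => [->//|/eqP H]; by rewrite /b1 dC hb // d0. Qed.
Lemma dbb1 i : d i bb1 = if i == izb then bb2 else 0.
Proof. case: eqP => [->//|/eqP H]; by rewrite /bb1 dC hbb // d0. Qed.

Definition gm (i j : 'I_4) : R :=
  match nat_of_ord i, nat_of_ord j with
  | 0, 3 | 3, 0 | 1, 2 | 2, 1 => u * h
  | 2, 2 => - (B * (u * u))
  | 3, 3 => - (A * (u * u))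
  | 2, 3 | 3, 2 => - ((A + B) * (u * u) * h)
  | _, _ => 0 end.
Definition gi (i j : 'I_4) : R :=
  match nat_of_ord i, nat_of_ord j with
  | 0, 0 => (1+1+1+1) * A
  | 1, 1 => (1+1+1+1) * B
  | 0, 1 | 1, 0 => (1+1) * (A + B)
  | 0, 3 | 3, 0 | 1, 2 | 2, 1 => (1+1) * s
  | _, _ => 0 end.
Definition Gm : 'M[R]_4 := \matrix_(i, j) gm i j.
Definition Gi : 'M[R]_4 := \matrix_(i, j) gi i j.

Lemma metricE : metric x b bb = Gm.
Proof.
apply/matrixP => i j; rewrite /metric /symp /fadd /fscale /dx !mxE.
rewrite -/s -/A -/B -/h -exprVn -/u expr2.
elim/ordP4: i; elim/ordP4: j; rewrite /gm /= ?mulr0n ?mulr1n.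
all: pre; ring [su h2].
Qed.
Lemma GiGm : Gi *m Gm = 1%:M.
Proof.
apply/matrixP => i j; rewrite !mxE sum4 !mxE.
elim/ordP4: i; elim/ordP4: j; rewrite /gm /gi /= ?mulr0n ?mulr1n.
all: pre; ring [su h2].
Qed.
Lemma invE : invmx Gm = Gi.
Proof.
have [_ U] := mulmx1_unit GiGm.
by rewrite -[invmx Gm]mul1mx -GiGm -mulmxA mulmxV // mulmx1.
Qed.
Definition C (k i j : 'I_4) : R :=
  match nat_of_ord k, nat_of_ord i, nat_of_ord j with
  | 0, 0, 2 => - (u)
  | 0, 0, 3 => - (u)
  | 0, 2, 0 => - (u)
  | 0, 2, 2 => (((u*bb1)) + (- (u*b1))) + (((1+1)*u*u*A))
  | 0, 2, 3 => (- (u*b1)) + (((1+1)*u*u*A))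
  | 0, 3, 0 => - (u)
  | 0, 3, 2 => (- (u*b1)) + (((1+1)*u*u*A))
  | 0, 3, 3 => ((1+1)*u*u*A)
  | 1, 1, 2 => - (u)
  | 1, 1, 3 => - (u)
  | 1, 2, 1 => - (u)
  | 1, 2, 2 => ((1+1)*u*u*B)
  | 1, 2, 3 => (- (u*bb1)) + (((1+1)*u*u*B))
  | 1, 3, 1 => - (u)
  | 1, 3, 2 => (- (u*bb1)) + (((1+1)*u*u*B))
  | 1, 3, 3 => ((- (u*bb1)) + ((u*b1))) + (((1+1)*u*u*B))
  | _, _, _ => 0 end.
Lemma chr2E_iq i j : chr2 d Gm iq i j = C iq i j.
Proof.
rewrite /chr2 /ginv invE sum4 /chr1 !mxE -/h.
elim/ordP4: i; elim/ordP4: j; rewrite /gm /gi /C /=.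
all: rewrite ?(dD, dM, dN, d0, d1, du, dh, dA, dB) /=.
all: pre; ring [su h2].
Qed.
Lemma chr2E_iqb i j : chr2 d Gm iqb i j = C iqb i j.
Proof.
rewrite /chr2 /ginv invE sum4 /chr1 !mxE -/h.
elim/ordP4: i; elim/ordP4: j; rewrite /gm /gi /C /=.
all: rewrite ?(dD, dM, dN, d0, d1, du, dh, dA, dB) /=.
all: pre; ring [su h2].
Qed.
Lemma chr2E_iz i j : chr2 d Gm iz i j = C iz i j.
Proof.
rewrite /chr2 /ginv invE sum4 /chr1 !mxE -/h.
elim/ordP4: i; elim/ordP4: j; rewrite /gm /gi /C /=.
all: rewrite ?(dD, dM, dN, d0, d1, du, dh, dA, dB) /=.
all: pre; ring [su h2].
Qed.
Lemma chr2E_izb i j : chr2 d Gm izb i j = C izb i j.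
Proof.
rewrite /chr2 /ginv invE sum4 /chr1 !mxE -/h.
elim/ordP4: i; elim/ordP4: j; rewrite /gm /gi /C /=.
all: rewrite ?(dD, dM, dN, d0, d1, du, dh, dA, dB) /=.
all: pre; ring [su h2].
Qed.
Lemma chr2E k i j : chr2 d Gm k i j = C k i j.
Proof. elim/ordP4: k; [exact: chr2E_iq|exact: chr2E_iqb|exact: chr2E_iz|exact: chr2E_izb]. Qed.
Definition U (r s' m n : 'I_4) : R :=
  match nat_of_ord r, nat_of_ord s', nat_of_ord m, nat_of_ord n with
  | 0, 2, 2, 3 => (((- (u*bb2)) + (- (u*b2))) + (((1+1)*u*u*bb1))) + (((1+1)*u*u*b1))
  | 0, 2, 3, 2 => ((((u*bb2)) + ((u*b2))) + (- ((1+1)*u*u*bb1))) + (- ((1+1)*u*u*b1))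
  | 1, 3, 2, 3 => ((((u*bb2)) + ((u*b2))) + (- ((1+1)*u*u*bb1))) + (- ((1+1)*u*u*b1))
  | 1, 3, 3, 2 => (((- (u*bb2)) + (- (u*b2))) + (((1+1)*u*u*bb1))) + (((1+1)*u*u*b1))
  | _, _, _, _ => 0 end.
Lemma riem_upE_iq_iq m n : riem_up d Gm iq iq m n = U iq iq m n.
Proof.
rewrite /riem_up sum4 !chr2E.
elim/ordP4: m; elim/ordP4: n; rewrite /C /U /=.
all: rewrite ?(dD, dM, dN, d0, d1, du, dh, dA, dB, db1, dbb1) /=.
all: pre; ring.
Qed.
Lemma riem_upE_iq_iqb m n : riem_up d Gm iq iqb m n = U iq iqb m n.
Proof.
rewrite /riem_up sum4 !chr2E.
elim/ordP4: m; elim/ordP4: n; rewrite /C /U /=.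
all: rewrite ?(dD, dM, dN, d0, d1, du, dh, dA, dB, db1, dbb1) /=.
all: pre; ring.
Qed.
Lemma riem_upE_iq_iz m n : riem_up d Gm iq iz m n = U iq iz m n.
Proof.
rewrite /riem_up sum4 !chr2E.
elim/ordP4: m; elim/ordP4: n; rewrite /C /U /=.
all: rewrite ?(dD, dM, dN, d0, d1, du, dh, dA, dB, db1, dbb1) /=.
all: pre; ring.
Qed.
Lemma riem_upE_iq_izb m n : riem_up d Gm iq izb m n = U iq izb m n.
Proof.
rewrite /riem_up sum4 !chr2E.
elim/ordP4: m; elim/ordP4: n; rewrite /C /U /=.
all: rewrite ?(dD, dM, dN, d0, d1, du, dh, dA, dB, db1, dbb1) /=.
all: pre; ring.
Qed.
Lemma riem_upE_iq s' m n : riem_up d Gm iq s' m n = U iq s' m n.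
Proof. elim/ordP4: s'; [exact: riem_upE_iq_iq|exact: riem_upE_iq_iqb|exact: riem_upE_iq_iz|exact: riem_upE_iq_izb]. Qed.
Lemma riem_upE_iqb_iq m n : riem_up d Gm iqb iq m n = U iqb iq m n.
Proof.
rewrite /riem_up sum4 !chr2E.
elim/ordP4: m; elim/ordP4: n; rewrite /C /U /=.
all: rewrite ?(dD, dM, dN, d0, d1, du, dh, dA, dB, db1, dbb1) /=.
all: pre; ring.
Qed.
Lemma riem_upE_iqb_iqb m n : riem_up d Gm iqb iqb m n = U iqb iqb m n.
Proof.
rewrite /riem_up sum4 !chr2E.
elim/ordP4: m; elim/ordP4: n; rewrite /C /U /=.
all: rewrite ?(dD, dM, dN, d0, d1, du, dh, dA, dB, db1, dbb1) /=.
all: pre; ring.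
Qed.
Lemma riem_upE_iqb_iz m n : riem_up d Gm iqb iz m n = U iqb iz m n.
Proof.
rewrite /riem_up sum4 !chr2E.
elim/ordP4: m; elim/ordP4: n; rewrite /C /U /=.
all: rewrite ?(dD, dM, dN, d0, d1, du, dh, dA, dB, db1, dbb1) /=.
all: pre; ring.
Qed.
Lemma riem_upE_iqb_izb m n : riem_up d Gm iqb izb m n = U iqb izb m n.
Proof.
rewrite /riem_up sum4 !chr2E.
elim/ordP4: m; elim/ordP4: n; rewrite /C /U /=.
all: rewrite ?(dD, dM, dN, d0, d1, du, dh, dA, dB, db1, dbb1) /=.
all: pre; ring.
Qed.
Lemma riem_upE_iqb s' m n : riem_up d Gm iqb s' m n = U iqb s' m n.
Proof. elim/ordP4: s'; [exact: riem_upE_iqb_iq|exact: riem_upE_iqb_iqb|exact: riem_upE_iqb_iz|exact: riem_upE_iqb_izb]. Qed.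
Lemma riem_upE_iz_iq m n : riem_up d Gm iz iq m n = U iz iq m n.
Proof.
rewrite /riem_up sum4 !chr2E.
elim/ordP4: m; elim/ordP4: n; rewrite /C /U /=.
all: rewrite ?(dD, dM, dN, d0, d1, du, dh, dA, dB, db1, dbb1) /=.
all: pre; ring.
Qed.
Lemma riem_upE_iz_iqb m n : riem_up d Gm iz iqb m n = U iz iqb m n.
Proof.
rewrite /riem_up sum4 !chr2E.
elim/ordP4: m; elim/ordP4: n; rewrite /C /U /=.
all: rewrite ?(dD, dM, dN, d0, d1, du, dh, dA, dB, db1, dbb1) /=.
all: pre; ring.
Qed.
Lemma riem_upE_iz_iz m n : riem_up d Gm iz iz m n = U iz iz m n.
Proof.
rewrite /riem_up sum4 !chr2E.
elim/ordP4: m; elim/ordP4: n; rewrite /C /U /=.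
all: rewrite ?(dD, dM, dN, d0, d1, du, dh, dA, dB, db1, dbb1) /=.
all: pre; ring.
Qed.
Lemma riem_upE_iz_izb m n : riem_up d Gm iz izb m n = U iz izb m n.
Proof.
rewrite /riem_up sum4 !chr2E.
elim/ordP4: m; elim/ordP4: n; rewrite /C /U /=.
all: rewrite ?(dD, dM, dN, d0, d1, du, dh, dA, dB, db1, dbb1) /=.
all: pre; ring.
Qed.
Lemma riem_upE_iz s' m n : riem_up d Gm iz s' m n = U iz s' m n.
Proof. elim/ordP4: s'; [exact: riem_upE_iz_iq|exact: riem_upE_iz_iqb|exact: riem_upE_iz_iz|exact: riem_upE_iz_izb]. Qed.
Lemma riem_upE_izb_iq m n : riem_up d Gm izb iq m n = U izb iq m n.
Proof.
rewrite /riem_up sum4 !chr2E.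
elim/ordP4: m; elim/ordP4: n; rewrite /C /U /=.
all: rewrite ?(dD, dM, dN, d0, d1, du, dh, dA, dB, db1, dbb1) /=.
all: pre; ring.
Qed.
Lemma riem_upE_izb_iqb m n : riem_up d Gm izb iqb m n = U izb iqb m n.
Proof.
rewrite /riem_up sum4 !chr2E.
elim/ordP4: m; elim/ordP4: n; rewrite /C /U /=.
all: rewrite ?(dD, dM, dN, d0, d1, du, dh, dA, dB, db1, dbb1) /=.
all: pre; ring.
Qed.
Lemma riem_upE_izb_iz m n : riem_up d Gm izb iz m n = U izb iz m n.
Proof.
rewrite /riem_up sum4 !chr2E.
elim/ordP4: m; elim/ordP4: n; rewrite /C /U /=.
all: rewrite ?(dD, dM, dN, d0, d1, du, dh, dA, dB, db1, dbb1) /=.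
all: pre; ring.
Qed.
Lemma riem_upE_izb_izb m n : riem_up d Gm izb izb m n = U izb izb m n.
Proof.
rewrite /riem_up sum4 !chr2E.
elim/ordP4: m; elim/ordP4: n; rewrite /C /U /=.
all: rewrite ?(dD, dM, dN, d0, d1, du, dh, dA, dB, db1, dbb1) /=.
all: pre; ring.
Qed.
Lemma riem_upE_izb s' m n : riem_up d Gm izb s' m n = U izb s' m n.
Proof. elim/ordP4: s'; [exact: riem_upE_izb_iq|exact: riem_upE_izb_iqb|exact: riem_upE_izb_iz|exact: riem_upE_izb_izb]. Qed.
Lemma riem_upE r s' m n : riem_up d Gm r s' m n = U r s' m n.
Proof. elim/ordP4: r; [exact: riem_upE_iq|exact: riem_upE_iqb|exact: riem_upE_iz|exact: riem_upE_izb]. Qed.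
Lemma ricciE i j : ricci d Gm i j = 0.
Proof.
rewrite /ricci sum4 !riem_upE.
elim/ordP4: i; elim/ordP4: j; rewrite /U /=.
all: pre; ring.
Qed.

Definition cc : rat := - (2%:R)^-1.
Lemma ratrc : ratr cc = - h :> R.
Proof.
have E1 : numq cc = -1 by vm_compute.
have E2 : denq cc = 2 by vm_compute.
by rewrite /ratr E1 E2 rmorphN1 mulN1r.
Qed.

Lemma riemE_iq_iq k l :
  riem d Gm iq iq k l =
  sgn_zzb R iq iq * sgn_zzb R k l *
  (ratr cc * s ^- 3 *
   (2%:R * (d iz b + d izb bb) - s * (d iz (d iz b) + d izb (d izb bb)))).
Proof.
rewrite /riem sum4 !riem_upE !mxE ratrc -exprVn -/u -/b1 -/bb1 -/b2 -/bb2.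
rewrite -[2%:R]/(1+1 : R) !exprS expr0.
elim/ordP4: k; elim/ordP4: l; rewrite /sgn_zzb /gm /U /=.
all: pre; ring [su h2].
Qed.
Lemma riemE_iq_iqb k l :
  riem d Gm iq iqb k l =
  sgn_zzb R iq iqb * sgn_zzb R k l *
  (ratr cc * s ^- 3 *
   (2%:R * (d iz b + d izb bb) - s * (d iz (d iz b) + d izb (d izb bb)))).
Proof.
rewrite /riem sum4 !riem_upE !mxE ratrc -exprVn -/u -/b1 -/bb1 -/b2 -/bb2.
rewrite -[2%:R]/(1+1 : R) !exprS expr0.
elim/ordP4: k; elim/ordP4: l; rewrite /sgn_zzb /gm /U /=.
all: pre; ring [su h2].
Qed.
Lemma riemE_iq_iz k l :
  riem d Gm iq iz k l =
  sgn_zzb R iq iz * sgn_zzb R k l *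
  (ratr cc * s ^- 3 *
   (2%:R * (d iz b + d izb bb) - s * (d iz (d iz b) + d izb (d izb bb)))).
Proof.
rewrite /riem sum4 !riem_upE !mxE ratrc -exprVn -/u -/b1 -/bb1 -/b2 -/bb2.
rewrite -[2%:R]/(1+1 : R) !exprS expr0.
elim/ordP4: k; elim/ordP4: l; rewrite /sgn_zzb /gm /U /=.
all: pre; ring [su h2].
Qed.
Lemma riemE_iq_izb k l :
  riem d Gm iq izb k l =
  sgn_zzb R iq izb * sgn_zzb R k l *
  (ratr cc * s ^- 3 *
   (2%:R * (d iz b + d izb bb) - s * (d iz (d iz b) + d izb (d izb bb)))).
Proof.
rewrite /riem sum4 !riem_upE !mxE ratrc -exprVn -/u -/b1 -/bb1 -/b2 -/bb2.
rewrite -[2%:R]/(1+1 : R) !exprS expr0.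
elim/ordP4: k; elim/ordP4: l; rewrite /sgn_zzb /gm /U /=.
all: pre; ring [su h2].
Qed.
Lemma riemE_iq j k l :
  riem d Gm iq j k l =
  sgn_zzb R iq j * sgn_zzb R k l *
  (ratr cc * s ^- 3 *
   (2%:R * (d iz b + d izb bb) - s * (d iz (d iz b) + d izb (d izb bb)))).
Proof. elim/ordP4: j; [exact: riemE_iq_iq|exact: riemE_iq_iqb|exact: riemE_iq_iz|exact: riemE_iq_izb]. Qed.
Lemma riemE_iqb_iq k l :
  riem d Gm iqb iq k l =
  sgn_zzb R iqb iq * sgn_zzb R k l *
  (ratr cc * s ^- 3 *
   (2%:R * (d iz b + d izb bb) - s * (d iz (d iz b) + d izb (d izb bb)))).
Proof.
rewrite /riem sum4 !riem_upE !mxE ratrc -exprVn -/u -/b1 -/bb1 -/b2 -/bb2.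
rewrite -[2%:R]/(1+1 : R) !exprS expr0.
elim/ordP4: k; elim/ordP4: l; rewrite /sgn_zzb /gm /U /=.
all: pre; ring [su h2].
Qed.
Lemma riemE_iqb_iqb k l :
  riem d Gm iqb iqb k l =
  sgn_zzb R iqb iqb * sgn_zzb R k l *
  (ratr cc * s ^- 3 *
   (2%:R * (d iz b + d izb bb) - s * (d iz (d iz b) + d izb (d izb bb)))).
Proof.
rewrite /riem sum4 !riem_upE !mxE ratrc -exprVn -/u -/b1 -/bb1 -/b2 -/bb2.
rewrite -[2%:R]/(1+1 : R) !exprS expr0.
elim/ordP4: k; elim/ordP4: l; rewrite /sgn_zzb /gm /U /=.
all: pre; ring [su h2].
Qed.
Lemma riemE_iqb_iz k l :
  riem d Gm iqb iz k l =
  sgn_zzb R iqb iz * sgn_zzb R k l *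
  (ratr cc * s ^- 3 *
   (2%:R * (d iz b + d izb bb) - s * (d iz (d iz b) + d izb (d izb bb)))).
Proof.
rewrite /riem sum4 !riem_upE !mxE ratrc -exprVn -/u -/b1 -/bb1 -/b2 -/bb2.
rewrite -[2%:R]/(1+1 : R) !exprS expr0.
elim/ordP4: k; elim/ordP4: l; rewrite /sgn_zzb /gm /U /=.
all: pre; ring [su h2].
Qed.
Lemma riemE_iqb_izb k l :
  riem d Gm iqb izb k l =
  sgn_zzb R iqb izb * sgn_zzb R k l *
  (ratr cc * s ^- 3 *
   (2%:R * (d iz b + d izb bb) - s * (d iz (d iz b) + d izb (d izb bb)))).
Proof.
rewrite /riem sum4 !riem_upE !mxE ratrc -exprVn -/u -/b1 -/bb1 -/b2 -/bb2.
rewrite -[2%:R]/(1+1 : R) !exprS expr0.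
elim/ordP4: k; elim/ordP4: l; rewrite /sgn_zzb /gm /U /=.
all: pre; ring [su h2].
Qed.
Lemma riemE_iqb j k l :
  riem d Gm iqb j k l =
  sgn_zzb R iqb j * sgn_zzb R k l *
  (ratr cc * s ^- 3 *
   (2%:R * (d iz b + d izb bb) - s * (d iz (d iz b) + d izb (d izb bb)))).
Proof. elim/ordP4: j; [exact: riemE_iqb_iq|exact: riemE_iqb_iqb|exact: riemE_iqb_iz|exact: riemE_iqb_izb]. Qed.
Lemma riemE_iz_iq k l :
  riem d Gm iz iq k l =
  sgn_zzb R iz iq * sgn_zzb R k l *
  (ratr cc * s ^- 3 *
   (2%:R * (d iz b + d izb bb) - s * (d iz (d iz b) + d izb (d izb bb)))).
Proof.
rewrite /riem sum4 !riem_upE !mxE ratrc -exprVn -/u -/b1 -/bb1 -/b2 -/bb2.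
rewrite -[2%:R]/(1+1 : R) !exprS expr0.
elim/ordP4: k; elim/ordP4: l; rewrite /sgn_zzb /gm /U /=.
all: pre; ring [su h2].
Qed.
Lemma riemE_iz_iqb k l :
  riem d Gm iz iqb k l =
  sgn_zzb R iz iqb * sgn_zzb R k l *
  (ratr cc * s ^- 3 *
   (2%:R * (d iz b + d izb bb) - s * (d iz (d iz b) + d izb (d izb bb)))).
Proof.
rewrite /riem sum4 !riem_upE !mxE ratrc -exprVn -/u -/b1 -/bb1 -/b2 -/bb2.
rewrite -[2%:R]/(1+1 : R) !exprS expr0.
elim/ordP4: k; elim/ordP4: l; rewrite /sgn_zzb /gm /U /=.
all: pre; ring [su h2].
Qed.
Lemma riemE_iz_iz k l :
  riem d Gm iz iz k l =
  sgn_zzb R iz iz * sgn_zzb R k l *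
  (ratr cc * s ^- 3 *
   (2%:R * (d iz b + d izb bb) - s * (d iz (d iz b) + d izb (d izb bb)))).
Proof.
rewrite /riem sum4 !riem_upE !mxE ratrc -exprVn -/u -/b1 -/bb1 -/b2 -/bb2.
rewrite -[2%:R]/(1+1 : R) !exprS expr0.
elim/ordP4: k; elim/ordP4: l; rewrite /sgn_zzb /gm /U /=.
all: pre; ring [su h2].
Qed.
Lemma riemE_iz_izb k l :
  riem d Gm iz izb k l =
  sgn_zzb R iz izb * sgn_zzb R k l *
  (ratr cc * s ^- 3 *
   (2%:R * (d iz b + d izb bb) - s * (d iz (d iz b) + d izb (d izb bb)))).
Proof.
rewrite /riem sum4 !riem_upE !mxE ratrc -exprVn -/u -/b1 -/bb1 -/b2 -/bb2.
rewrite -[2%:R]/(1+1 : R) !exprS expr0.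
elim/ordP4: k; elim/ordP4: l; rewrite /sgn_zzb /gm /U /=.
all: pre; ring [su h2].
Qed.
Lemma riemE_iz j k l :
  riem d Gm iz j k l =
  sgn_zzb R iz j * sgn_zzb R k l *
  (ratr cc * s ^- 3 *
   (2%:R * (d iz b + d izb bb) - s * (d iz (d iz b) + d izb (d izb bb)))).
Proof. elim/ordP4: j; [exact: riemE_iz_iq|exact: riemE_iz_iqb|exact: riemE_iz_iz|exact: riemE_iz_izb]. Qed.
Lemma riemE_izb_iq k l :
  riem d Gm izb iq k l =
  sgn_zzb R izb iq * sgn_zzb R k l *
  (ratr cc * s ^- 3 *
   (2%:R * (d iz b + d izb bb) - s * (d iz (d iz b) + d izb (d izb bb)))).
Proof.
rewrite /riem sum4 !riem_upE !mxE ratrc -exprVn -/u -/b1 -/bb1 -/b2 -/bb2.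
rewrite -[2%:R]/(1+1 : R) !exprS expr0.
elim/ordP4: k; elim/ordP4: l; rewrite /sgn_zzb /gm /U /=.
all: pre; ring [su h2].
Qed.
Lemma riemE_izb_iqb k l :
  riem d Gm izb iqb k l =
  sgn_zzb R izb iqb * sgn_zzb R k l *
  (ratr cc * s ^- 3 *
   (2%:R * (d iz b + d izb bb) - s * (d iz (d iz b) + d izb (d izb bb)))).
Proof.
rewrite /riem sum4 !riem_upE !mxE ratrc -exprVn -/u -/b1 -/bb1 -/b2 -/bb2.
rewrite -[2%:R]/(1+1 : R) !exprS expr0.
elim/ordP4: k; elim/ordP4: l; rewrite /sgn_zzb /gm /U /=.
all: pre; ring [su h2].
Qed.
Lemma riemE_izb_iz k l :
  riem d Gm izb iz k l =
  sgn_zzb R izb iz * sgn_zzb R k l *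
  (ratr cc * s ^- 3 *
   (2%:R * (d iz b + d izb bb) - s * (d iz (d iz b) + d izb (d izb bb)))).
Proof.
rewrite /riem sum4 !riem_upE !mxE ratrc -exprVn -/u -/b1 -/bb1 -/b2 -/bb2.
rewrite -[2%:R]/(1+1 : R) !exprS expr0.
elim/ordP4: k; elim/ordP4: l; rewrite /sgn_zzb /gm /U /=.
all: pre; ring [su h2].
Qed.
Lemma riemE_izb_izb k l :
  riem d Gm izb izb k l =
  sgn_zzb R izb izb * sgn_zzb R k l *
  (ratr cc * s ^- 3 *
   (2%:R * (d iz b + d izb bb) - s * (d iz (d iz b) + d izb (d izb bb)))).
Proof.
rewrite /riem sum4 !riem_upE !mxE ratrc -exprVn -/u -/b1 -/bb1 -/b2 -/bb2.
rewrite -[2%:R]/(1+1 : R) !exprS expr0.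
elim/ordP4: k; elim/ordP4: l; rewrite /sgn_zzb /gm /U /=.
all: pre; ring [su h2].
Qed.
Lemma riemE_izb j k l :
  riem d Gm izb j k l =
  sgn_zzb R izb j * sgn_zzb R k l *
  (ratr cc * s ^- 3 *
   (2%:R * (d iz b + d izb bb) - s * (d iz (d iz b) + d izb (d izb bb)))).
Proof. elim/ordP4: j; [exact: riemE_izb_iq|exact: riemE_izb_iqb|exact: riemE_izb_iz|exact: riemE_izb_izb]. Qed.
Lemma riemE i j k l :
  riem d Gm i j k l =
  sgn_zzb R i j * sgn_zzb R k l *
  (ratr cc * s ^- 3 *
   (2%:R * (d iz b + d izb bb) - s * (d iz (d iz b) + d izb (d izb bb)))).
Proof. elim/ordP4: i; [exact: riemE_iq|exact: riemE_iqb|exact: riemE_iz|exact: riemE_izb]. Qed.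
End Main.

Theorem mainTheorem7 :
  exists c : rat, c != 0 /\
  forall (R : comUnitRingType) (d : 'I_4 -> R -> R) (x : 'I_4 -> R) (b bb : R),
    is_deriv4 d -> is_coords d x ->
    (2%:R : R) \is a GRing.unit ->
    x iz + x izb \is a GRing.unit ->
    (forall i, i != iz -> d i b = 0) ->
    (forall i, i != izb -> d i bb = 0) ->
    let g := metric x b bb in
    let s := x iz + x izb in
    (forall i j, ricci d g i j = 0) /\
    (forall i j k l,
       riem d g i j k l =
       sgn_zzb R i j * sgn_zzb R k l *
       (ratr c * s ^- 3 *
          (2%:R * (d iz b + d izb bb) - s * (d iz (d iz b) + d izb (d izb bb))))).
Proof.
exists cc; split; first by vm_compute.
move=> R d x b bb hd hx h2u hsu hb hbb g s0.
rewrite /g metricE //; split.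
- by move=> i j; apply: ricciE.
- by move=> i j k l; apply: riemE.
Qed.
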